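(* Let $R>0$ and let $B_{\mathcal D}=\{\beta_1,\dots,\beta_n\}$ with $0\le\beta_1\le\dots\le\beta_n$ and $\sum_i\beta_i=\beta$ be a bid set of $\mathcal D$. Fix $\ell\in\{1,\dots,n\}$ and suppose some $\ell$-set $I$ satisfies all three of: - (P1) $|I|\le n$; - (P2) $\Sigma(I)\ge \frac{R_\ell\,\ell(\ell+1)}{2}$; - (P3) $\sigma(I,\ell)+(n-|I|)\beta_{n-\ell}<R\beta$. Then $W(\pi_{\rm unif},B_{\mathcal D})\ge f(\ell)$.
   Context: Position-randomized auction with two bidders $\mathcal A$ and $\mathcal D$ and $n\ge1$ objects. $\mathcal D$ has budget $\beta>0$ and $\mathcal A$ has budget $R\beta$ with $R>0$. A bidding algorithm of a bidder is a pair $(\pi,B)$: $B$ (the bid set) is a multiset of $n$ nonnegative reals whose sum is at most the bidder's budget, and $\pi$ is a randomized algorithm permuting sequences of length $n$. Applying $\pi$ to a listing of $B$ gives the final bid sequence, whose $i$-th entry is the bid on object $i$. The two bidders' permutations are independent. Each object goes to the higher bid; on a tie each bidder wins it with probability $1/2$. $w(\pi_{\mathcal A},\pi_{\mathcal D},B_{\mathcal A},B_{\mathcal D})$ is the expected number of objects won by $\mathcal A$. $W(\pi_{\mathcal D},B_{\mathcal D})$ is its supremum over all bidding algorithms $(\pi_{\mathcal A},B_{\mathcal A})$ of $\mathcal A$. $\pi_{\rm unif}$ applies a uniformly random permutation. For $x,y>0$, $\mathrm{less}(x,y)=y(\lceil x/y\rceil-1)$. For $\ell=1,\dots,n$, let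 $R_\ell=\mathrm{less}(R,\frac2{\ell(\ell+1)})$ and $f(\ell)=n-\ell+\frac{\ell(\ell+1)R_\ell}{2n}$. Set $\beta_0=0$. An $\ell$-set is a finite multiset of elements of $\{0,1,\dots,\ell\}$. For a multiset $I$, $|I|$ is its cardinality and $\Sigma(I)$ the sum of its elements, both counting multiplicity. For an $\ell$-set $I$, $\sigma(I,\ell)=\sum_{i\in I}\beta_{n-\ell+i}$, counting multiplicity. *)

(* Defs.v *)
From HB Require Import structures.
From mathcomp Require Import all_boot all_order all_algebra perm.
From mathcomp Require Import boolp classical_sets reals.
Set Implicit Arguments. Unset Strict Implicit. Unset Printing Implicit Defensive.
Import Order.TTheory GRing.Theory Num.Theory.
Local Open Scope ring_scope.

Section Auction.
Variable R : realType.

Definition less (x y : R) : R := y * ((Num.ceil (x / y))%:~R - 1).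

Definition Rl (rho : R) (l : nat) : R := less rho (2 / (l * l.+1)%:R).

Definition fval (rho : R) (n l : nat) : R :=
  n%:R - l%:R + (l * l.+1)%:R * Rl rho l / (2 * n%:R).

(* A bid set (multiset) of n nonneg reals with sum at most the budget,
   given through a listing (an n-tuple). *)
Definition bid_set (n : nat) (budget : R) (B : n.-tuple R) : Prop :=
  (forall i, 0 <= tnth B i) /\ \sum_(i < n) tnth B i <= budget.

(* A randomized permuting algorithm: given the listing of the input,
   it outputs a probability distribution over permutations of positions. *)
Definition randperm (n : nat) := n.-tuple R -> {perm 'I_n} -> R.

Definition is_randperm (n : nat) (pi : randperm n) : Prop :=
  forall t, (forall s, 0 <= pi t s) /\ \sum_(s : {perm 'I_n}) pi t s = 1.

Definition pi_unif (n : nat) : randperm n :=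
  fun _ _ => (#|{: {perm 'I_n}}|%:R)^-1.

Definition final_bid (n : nat) (B : n.-tuple R) (s : {perm 'I_n}) (i : 'I_n) : R :=
  tnth B (s i).

Definition win (x y : R) : R := if y < x then 1 else if x == y then 1/2 else 0.

Definition w (n : nat) (piA piD : randperm n) (BA BD : n.-tuple R) : R :=
  \sum_(sA : {perm 'I_n}) \sum_(sD : {perm 'I_n})
     piA BA sA * piD BD sD *
     \sum_(i < n) win (final_bid BA sA i) (final_bid BD sD i).

Definition W (n : nat) (rho beta : R) (piD : randperm n) (BD : n.-tuple R) : R :=
  sup [set x : R | exists (piA : randperm n) (BA : n.-tuple R),
          is_randperm piA /\ bid_set (rho * beta) BA /\ x = w piA piD BA BD].

(* beta_k for k = 1..n (1-indexed, sorted listing), with beta_0 = 0 *)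
Definition betaD (n : nat) (B : n.-tuple R) (k : nat) : R :=
  if k is k'.+1 then nth 0 B k' else 0.

(* an l-set: finite multiset of elements of {0,...,l} *)
Definition lset (l : nat) (I : seq nat) : bool := all (fun i => i <= l)%N I.

Definition sigmaI (n : nat) (B : n.-tuple R) (I : seq nat) (l : nat) : R :=
  \sum_(i <- I) betaD B (n - l + i)%N.

End Auction.

(* Main.v *)
Require Import Defs.
From HB Require Import structures.
From mathcomp Require Import all_boot all_order all_algebra perm.
From mathcomp Require Import boolp classical_sets reals.
From mathcomp Require Import ring lra.
Import Order.TTheory GRing.Theory Num.Theory.
Local Open Scope ring_scope.

Lemma perm_col (R : realType) n (F : 'I_n -> R) (i i' : 'I_n) :
  \sum_(s : {perm 'I_n}) F (s i) = \sum_(s : {perm 'I_n}) F (s i').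
Proof.
rewrite (reindex_inj (mulgI (tperm i' i))) /=.
by apply: eq_bigr => s _; rewrite permM tpermR.
Qed.

Lemma perm_sum (R : realType) n (F : 'I_n -> R) (i : 'I_n) :
  n%:R * \sum_(s : {perm 'I_n}) F (s i) = #|{: {perm 'I_n}}|%:R * \sum_j F j.
Proof.
have -> : n%:R * \sum_(s : {perm 'I_n}) F (s i) =
   \sum_(i' < n) \sum_(s : {perm 'I_n}) F (s i').
  transitivity (\sum_(i' < n) \sum_(s : {perm 'I_n}) F (s i)).
    by rewrite sumr_const card_ord mulr_natl.
  by apply: eq_bigr => i' _; exact: perm_col.
rewrite exchange_big /=.
rewrite (eq_bigr (fun _ => \sum_j F j)); last first.
  by move=> s _; rewrite [RHS](reindex_inj (@perm_inj _ s)).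
by rewrite sumr_const mulr_natl.
Qed.

Lemma sum_ltk (R : realType) n k : (k <= n)%N ->
  \sum_(j < n) (((j < k)%N)%:R : R) = k%:R.
Proof.
move=> Hk.
rewrite -(big_mkord xpredT (fun j => ((j < k)%N)%:R : R)).
rewrite (big_cat_nat (leq0n k) Hk) /=.
rewrite (eq_big_nat _ _ (F2 := fun _ => 1)); last by move=> j /andP[_ ->].
rewrite sumr_const_nat subn0 big1_seq ?addr0 //.
by move=> j /andP[_]; rewrite mem_index_iota => /andP[]; rewrite leqNgt => /negbTE ->.
Qed.

Lemma win_ge0 (R : realType) (x y : R) : 0 <= win x y.
Proof. rewrite /win; case: ifP => _; [lra|case: ifP => _; lra]. Qed.

Lemma win_le1 (R : realType) (x y : R) : win x y <= 1.
Proof. rewrite /win; case: ifP => _; [lra|case: ifP => _; lra]. Qed.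

Lemma betaD_ge0 (R : realType) n (BD : n.-tuple R) k :
  (forall i : 'I_n, 0 <= tnth BD i) -> 0 <= betaD BD k.
Proof.
move=> H; case: k => [|k] //=.
case: (ltnP k n) => Hk.
  by have := H (Ordinal Hk); rewrite (tnth_nth 0).
by rewrite nth_default // size_tuple.
Qed.

Lemma G_ge (R : realType) n (BD : n.-tuple R) k (eps : R) :
  sorted <=%R BD -> 0 < eps -> (k <= n)%N ->
  k%:R <= \sum_(j < n) win (betaD BD k + eps) (tnth BD j).
Proof.
move=> Hs He Hk.
rewrite -(sum_ltk R _ _ Hk); apply: ler_sum => j _.
case: ltnP => Hjk; last exact: win_ge0.
rewrite /win ifT //.
case: k Hjk Hk => [|k] // Hjk Hk /=.
rewrite (tnth_nth 0).
have : nth 0 BD j <= nth 0 BD k.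
  apply: (sorted_leq_nth le_trans lexx) => //; rewrite inE size_tuple //.
lra.
Qed.

Lemma w_le (R : realType) n (piA piD : randperm R n) BA BD :
  is_randperm piA -> is_randperm piD -> w piA piD BA BD <= n%:R.
Proof.
move=> HA HD; rewrite /w.
apply: (@le_trans _ _ (\sum_(sA : {perm 'I_n}) \sum_(sD : {perm 'I_n})
    piA BA sA * piD BD sD * n%:R)).
  apply: ler_sum => sA _; apply: ler_sum => sD _; apply: ler_wpM2l.
    by apply: mulr_ge0; [case: (HA BA) | case: (HD BD)].
  apply: (@le_trans _ _ (\sum_(i < n) (1 : R))).
    by apply: ler_sum => i _; exact: win_le1.
  by rewrite sumr_const card_ord.
under eq_bigr => sA _ do rewrite -big_distrl /= -big_distrr /= (proj2 (HD BD)) mulr1.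
by rewrite -big_distrl /= (proj2 (HA BA)) mul1r.
Qed.

Lemma unif_randperm (R : realType) n : is_randperm (@pi_unif R n).
Proof.
move=> t; rewrite /pi_unif; split => [s|].
  by rewrite invr_ge0 ler0n.
rewrite sumr_const -[X in X = 1]mulr_natr mulVf // pnatr_eq0 -lt0n.
by apply/card_gt0P; exists 1%g.
Qed.

Lemma w_unif (R : realType) n (BA BD : n.-tuple R) : (0 < n)%N ->
  w (@pi_unif R n) (@pi_unif R n) BA BD =
  (\sum_(x <- BA) \sum_(j < n) win x (tnth BD j)) / n%:R.
Proof.
move=> Hn.
set N : R := #|{: {perm 'I_n}}|%:R.
have NN : N != 0 by rewrite pnatr_eq0 -lt0n; apply/card_gt0P; exists 1%g.
have nN : (n%:R : R) != 0 by rewrite pnatr_eq0 -lt0n.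
rewrite /w /pi_unif -/N.
under eq_bigr => sA _ do rewrite -big_distrr /=.
rewrite -big_distrr /=.
have E : forall sA : {perm 'I_n},
  \sum_(sD : {perm 'I_n}) \sum_(i < n) win (final_bid BA sA i) (final_bid BD sD i)
  = N / n%:R * \sum_(x <- BA) \sum_(j < n) win x (tnth BD j).
  move=> sA; rewrite exchange_big /=.
  transitivity (\sum_(i < n) N / n%:R * \sum_(j < n) win (tnth BA (sA i)) (tnth BD j)).
    apply: eq_bigr => i _; apply: (mulfI nN).
    rewrite /final_bid (perm_sum _ _ (fun j => win (tnth BA (sA i)) (tnth BD j))) -/N.
    by field.
  rewrite -big_distrr /= big_tuple; congr (_ * _).
  by rewrite [RHS](reindex_inj (@perm_inj _ sA)).
under eq_bigr => sA _ do rewrite E.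
rewrite sumr_const -/N -mulr_natr.
set T := \sum_(x <- BA) _.
rewrite -/N; field; by apply/andP.
Qed.

Lemma sum_nat_I (R : realType) (c : nat) (I : seq nat) :
  \sum_(i <- I) ((c + i)%N%:R : R) = (size I)%:R * c%:R + (sumn I)%:R.
Proof.
elim: I => [|x I IH]; first by rewrite big_nil mul0r add0r.
rewrite big_cons IH /= -addn1 !natrD; ring.
Qed.

Lemma sum_cst (R : realType) (T : Type) (x : R) (s : seq T) :
  \sum_(i <- s) x = (size s)%:R * x.
Proof.
elim: s => [|y s IH]; first by rewrite big_nil mul0r.
by rewrite big_cons IH /= -addn1 natrD; ring.
Qed.

Theorem lemma2 (R : realType) (n : nat) (rho beta : R) (BD : n.-tuple R)
    (l : nat) (I : seq nat) :
  (1 <= n)%N -> 0 < beta -> 0 < rho ->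
  (forall i : 'I_n, 0 <= tnth BD i) ->
  sorted <=%R BD ->
  \sum_(i < n) tnth BD i = beta ->
  (1 <= l <= n)%N ->
  lset l I ->
  (size I <= n)%N ->
  (sumn I)%:R >= Rl rho l * (l * l.+1)%:R / 2 ->
  sigmaI BD I l + (n - size I)%:R * betaD BD (n - l) < rho * beta ->
  W rho beta (@pi_unif R n) BD >= fval rho n l.
Proof.
move=> Hn Hb Hr Hnn Hs Hsum /andP[Hl1 Hln] HI HsI Hsumn Hsig.
set S := sigmaI BD I l + (n - size I)%:R * betaD BD (n - l).
have n0 : (0 : R) < n%:R by rewrite ltr0n.
pose eps := (rho * beta - S) / (2 * n%:R).
have Heps : 0 < eps by apply: divr_gt0; [rewrite subr_gt0 | apply: mulr_gt0].
have {Hsig} Hsig : S < rho * beta by [].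
pose a := [seq betaD BD (n - l + i) + eps | i <- I] ++
          nseq (n - size I) (betaD BD (n - l) + eps).
have Ha : size a == n by rewrite size_cat size_map size_nseq subnKC.
pose BA := @Tuple n R a Ha.
pose G := fun x => \sum_(j < n) win x (tnth BD j).
have HG : (n%:R * (n - l)%:R + (sumn I)%:R : R) <= \sum_(x <- a) G x.
  rewrite big_cat big_map /=.
  have H1 : \sum_(i <- I) ((n - l + i)%N%:R : R) <= \sum_(i <- I) G (betaD BD (n - l + i) + eps).
    rewrite big_seq [X in _ <= X]big_seq; apply: ler_sum => i Hi.
    apply: G_ge => //; move/allP: HI => /(_ i Hi) Hil.
    by rewrite -[X in (_ <= X)%N](subnK Hln) leq_add2l.
  have H2 : ((n - size I) * (n - l))%N%:R <= \sum_(x <- nseq (n - size I) (betaD BD (n - l) + eps)) G x.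
    elim: (n - size I)%N => [|m IH]; first by rewrite big_nil mul0n.
    rewrite big_cons mulSn natrD; apply: lerD => //.
    by apply: G_ge => //; rewrite leq_subr.
  move: (lerD H1 H2); rewrite sum_nat_I natrM !natrB //.
  apply: le_trans; rewrite le_eqVlt; apply/orP; left; apply/eqP; ring.
have Hbid : bid_set (rho * beta) BA.
  split.
    move=> i; rewrite (tnth_nth 0) /= nth_cat size_map.
    case: ifP => Hi.
      rewrite (nth_map 0) //; apply: addr_ge0; [exact: betaD_ge0 | lra].
    rewrite nth_nseq; case: ifP => _; last by [].
    apply: addr_ge0; [exact: betaD_ge0 | lra].
  rewrite -(big_tuple _ _ BA xpredT (fun x => x)) /= big_cat big_map /=.
  rewrite big_split /= sum_cst.
  have -> : \sum_(x <- nseq (n - size I) (betaD BD (n - l) + eps)) x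
            = (n - size I)%:R * (betaD BD (n - l) + eps).
    elim: (n - size I)%N => [|m IH]; first by rewrite big_nil mul0r.
    by rewrite big_cons IH -addn1 natrD; ring.
  have : S + n%:R * eps < rho * beta.
    have -> : n%:R * eps = (rho * beta - S) / 2.
      by rewrite /eps; field; rewrite gt_eqF.
    lra.
  rewrite /S /sigmaI natrB // => HH.
  set s := size I; rewrite -/s in HH.

  apply: ltW; move: HH; apply: le_lt_trans.
  rewrite le_eqVlt; apply/orP; left; apply/eqP. rewrite /s; ring.
apply: (@le_trans _ _ (w (@pi_unif R n) (@pi_unif R n) BA BD)); last first.
  apply: ub_le_sup.
    exists n%:R => x [piA [BA' [h1 [h2 ->]]]].
    by apply: w_le => //; exact: unif_randperm.
  exists (@pi_unif R n), BA; split; first exact: unif_randperm.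
  by split.
rewrite w_unif // ler_pdivlMr //.
apply: le_trans HG.
rewrite /fval natrB //.
have -> : (n%:R - l%:R + (l * l.+1)%:R * Rl rho l / (2 * n%:R)) * n%:R
   = n%:R * (n%:R - l%:R) + Rl rho l * (l * l.+1)%:R / 2.
  by field; rewrite gt_eqF.
by apply: lerD.
Qed.
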